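(* Consider the uplink system described in the context and suppose $L_u=1$ for all $u\in\{1,\dots,U\}$. Let $C^*$ be the optimal value of $$\max\ \log\Big|\sum_{u=1}^U \mathbf G_u(\mathbf w_u)\mathbf Q_u\mathbf G_u^H(\mathbf w_u)+\mathbf I_M\Big|$$ over $\mathbf Q_u\succeq\mathbf 0$, $\mathrm{tr}(\mathbf Q_u)\le P_u$, $0\le w_{u,n}\le W_u$, $w_{u,n}\ne w_{u,n'}$ ($n\ne n'$), $u=1,\dots,U$, and let $C^{\mathrm{ub}*}$ be the optimal value of $$\max\ \log\Big|\sum_{u=1}^U MN_u\mathbf A_{u,\mathrm R}\boldsymbol\Gamma_u\tilde{\mathbf Q}_u\boldsymbol\Gamma_u^H\mathbf A_{u,\mathrm R}^H+\mathbf I_M\Big|$$ over $\tilde{\mathbf Q}_u\in\mathbb C^{L_u\times L_u}$, $\tilde{\mathbf Q}_u\succeq\mathbf 0$, $\mathrm{tr}(\tilde{\mathbf Q}_u)\le L_uP_u$. Then $$C^*=C^{\mathrm{ub}*}=\log\Big|\sum_{u=1}^U MN_uP_u|\gamma_{u,1}|^2\mathbf a_{u,\mathrm R}(\beta_{u,1})\mathbf a_{u,\mathrm R}^H(\beta_{u,1})+\mathbf I_M\Big|.$$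
   Context: A base station (BS) has an $M$-antenna uniform linear array with spacing $d=\lambda/2$ ($\lambda$ the wavelength). User $u\in\{1,\dots,U\}$ has $N_u$ antennas at positions $w_{u,1},\dots,w_{u,N_u}\in[0,W_u]$ on a line, power budget $P_u>0$, and $L_u$ propagation paths to the BS with complex gains $\gamma_{u,l}$, angles of arrival $\beta_{u,l}\in[0,\pi]$ and angles of departure $\theta_{u,l}\in[0,\pi]$. Define $\mathbf a_{u,\mathrm R}(\beta)=\frac1{\sqrt M}[1,e^{-j\frac{2\pi}{\lambda}d\cos\beta},\dots,e^{-j\frac{2\pi}{\lambda}(M-1)d\cos\beta}]^T$, $\mathbf a_{u,\mathrm T}(\theta,\mathbf w_u)=\frac1{\sqrt{N_u}}[e^{-j\frac{2\pi}{\lambda}w_{u,1}\cos\theta},\dots,e^{-j\frac{2\pi}{\lambda}w_{u,N_u}\cos\theta}]^T$, $\boldsymbol\Gamma_u=\mathrm{diag}(\gamma_{u,1},\dots,\gamma_{u,L_u})$, $\mathbf A_{u,\mathrm R}=[\mathbf a_{u,\mathrm R}(\beta_{u,l})]_{l=1}^{L_u}$, $\mathbf A_{u,\mathrm T}(\mathbf w_u)=[\mathbf a_{u,\mathrm T}(\theta_{u,l},\mathbf w_u)]_{l=1}^{L_u}$, and the channel $\mathbf G_u(\mathbf w_u)=\sqrt{MN_u}\,\mathbf A_{u,\mathrm R}\boldsymbol\Gamma_u\mathbf A_{u,\mathrm T}^H(\mathbf w_u)$. $|\cdot|$ denotes determinant. *)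

(* Defs.v *)
From mathcomp Require Import all_boot all_order all_algebra.
From mathcomp Require Import all_classical all_reals all_analysis.
From mathcomp Require Import complex.
Set Implicit Arguments. Unset Strict Implicit. Unset Printing Implicit Defensive.
Import GRing.Theory Num.Theory.
Local Open Scope ring_scope.
Local Open Scope complex_scope.

Section Channel.
Variable R : realType.
Local Notation C := R[i].

Definition expj (x : R) : C := (cos x +i* sin x).

Definition rC (x : R) : C := x%:C.

Definition hermT m n (A : 'M[C]_(m, n)) : 'M[C]_(n, m) := (map_mx Num.conj A)^T.

Definition psd n (Q : 'M[C]_n) : Prop :=
  Q = hermT Q /\ forall x : 'cV[C]_n, 0 <= (hermT x *m Q *m x) 0 0.

(* log |X| for a Hermitian matrix X (its determinant is real) *)
Definition logdet n (X : 'M[C]_n) : R := ln (complex.Re (\det X)).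

(* receive steering vector a_R(beta) of an M-element ULA with spacing d *)
Definition aR (lambda d : R) (M : nat) (beta : R) : 'cV[C]_M :=
  \col_(m < M) (rC (Num.sqrt (M%:R))^-1 *
                 expj (- (2 * pi / lambda) * (m%:R * d * cos beta))).

(* transmit steering vector a_T(theta, w) for antenna positions w *)
Definition aT (lambda : R) (N : nat) (theta : R) (w : 'I_N -> R) : 'cV[C]_N :=
  \col_(n < N) (rC (Num.sqrt (N%:R))^-1 *
                 expj (- (2 * pi / lambda) * (w n * cos theta))).

Definition AR (lambda d : R) (M L : nat) (beta : 'I_L -> R) : 'M[C]_(M, L) :=
  \matrix_(m < M, l < L) aR lambda d M (beta l) m 0.

Definition AT (lambda : R) (N L : nat) (theta : 'I_L -> R) (w : 'I_N -> R)
  : 'M[C]_(N, L) :=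
  \matrix_(n < N, l < L) aT lambda (theta l) w n 0.

Definition Gam (L : nat) (gamma : 'I_L -> C) : 'M[C]_L := diag_mx (\row_l gamma l).

Definition chan (lambda d : R) (M N L : nat) (gamma : 'I_L -> C)
  (beta theta : 'I_L -> R) (w : 'I_N -> R) : 'M[C]_(M, N) :=
  rC (Num.sqrt (M%:R * N%:R)) *:
    (AR lambda d M beta *m Gam gamma *m hermT (AT lambda theta w)).

Definition opt_value (S : R -> Prop) (v : R) : Prop :=
  S v /\ forall y, S y -> y <= v.

End Channel.

(* Main.v *)
Require Import Defs.
From mathcomp Require Import all_boot all_order all_algebra.
From mathcomp Require Import all_classical all_reals all_analysis.
From mathcomp Require Import complex.
From mathcomp Require Import ring.
Import GRing.Theory Num.Theory.
Import Order.TTheory.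
Local Open Scope ring_scope.

Module Aux.
Set Implicit Arguments. Unset Strict Implicit. Unset Printing Implicit Defensive.
Section Gen.
Variable R : realType.
Local Notation C := R[i].

Lemma hermTE m n (A : 'M[C]_(m, n)) i j : hermT A i j = (A j i)^*.
Proof. by rewrite !mxE. Qed.

Lemma hermT_mul m n p (A : 'M[C]_(m, n)) (B : 'M[C]_(n, p)) :
  hermT (A *m B) = hermT B *m hermT A.
Proof.
apply/matrixP => i j; rewrite !mxE rmorph_sum; apply: eq_bigr => k _.
by rewrite !mxE rmorphM mulrC.
Qed.

Lemma hermTK m n (A : 'M[C]_(m, n)) : hermT (hermT A) = A.
Proof. by apply/matrixP => i j; rewrite !hermTE conjCK. Qed.

Lemma hermTD m n (A B : 'M[C]_(m, n)) : hermT (A + B) = hermT A + hermT B.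
Proof. by apply/matrixP => i j; rewrite !mxE rmorphD. Qed.

Lemma hermTZ m n (c : C) (A : 'M[C]_(m, n)) : hermT (c *: A) = c^* *: hermT A.
Proof. by apply/matrixP => i j; rewrite !mxE rmorphM. Qed.

Lemma hermT1 n : hermT (1%:M : 'M[C]_n) = 1%:M.
Proof.
by apply/matrixP => i j; rewrite !mxE conjC_nat eq_sym.
Qed.

Lemma mx11_mul (A B : 'M[C]_1) : (A *m B) 0 0 = A 0 0 * B 0 0.
Proof. by rewrite mxE big_ord1. Qed.

Lemma det_rank1 n (x : 'cV[C]_n) (y : 'rV[C]_n) :
  \det (1%:M + x *m y) = 1 + (y *m x) 0 0.
Proof.
have E1 : block_mx 1%:M (-x) y 1%:M =
   block_mx 1%:M (-x) 0 1%:M *m block_mx (1%:M + x *m y) 0 y 1%:M.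
  rewrite mulmx_block !mul1mx !mul0mx ?mulmx0 !mulmx1 ?add0r ?addr0.
  by rewrite mulNmx addrK.
have E2 : block_mx 1%:M (-x) y 1%:M =
   block_mx 1%:M 0 y 1%:M *m block_mx 1%:M (-x) 0 (1%:M + y *m x).
  rewrite mulmx_block !mul1mx ?mul0mx ?mulmx0 ?mulmx1 ?addr0 ?add0r.
  by rewrite mulmxN addrCA addNr addr0.
have := congr1 determinant (etrans (esym E1) E2).
rewrite !det_mulmx det_ublock det_lblock !det1 !mul1r ?mulr1 => ->.
by rewrite det_lblock det_ublock !det1 !mul1r det_mx11 !mxE.
Qed.

Lemma qf_ge0 n (x : 'cV[C]_n) : 0 <= (hermT x *m x) 0 0.
Proof.
rewrite mxE; apply: sumr_ge0 => i _; rewrite hermTE -normCKC.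
by rewrite exprn_ge0.
Qed.

Lemma psd_add n (A B : 'M[C]_n) : psd A -> psd B -> psd (A + B).
Proof.
move=> [hA pA] [hB pB]; split; first by rewrite hermTD -hA -hB.
move=> x; rewrite mulmxDr mulmxDl mxE; exact: addr_ge0.
Qed.

Lemma psd_rank1 n (c : C) (a : 'cV[C]_n) : 0 <= c -> psd (c *: (a *m hermT a)).
Proof.
move=> c0; split.
  by rewrite hermTZ hermT_mul hermTK conj_Creal // ger0_real.
move=> x; rewrite -scalemxAr -scalemxAl mxE; apply: mulr_ge0 => //.
rewrite mulmxA -[_ *m hermT a *m x]mulmxA mx11_mul.
have -> : hermT x *m a = hermT (hermT a *m x) by rewrite hermT_mul hermTK.
by rewrite hermTE -normCKC exprn_ge0.
Qed.

Definition good n (A : 'M[C]_n) := psd A /\ 0 < \det A.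

Lemma good1 n : good (1%:M : 'M[C]_n).
Proof.
split; last by rewrite det1 ltr01.
split; first by rewrite hermT1.
by move=> x; rewrite mulmx1 qf_ge0.
Qed.

Lemma det_step n (A : 'M[C]_n) (a : 'cV[C]_n) : good A ->
  exists2 q, 0 <= q & forall c, \det (A + c *: (a *m hermT a)) = \det A * (1 + c * q).
Proof.
move=> [[hA pA] dA].
have uA : A \in unitmx by rewrite unitmxE unitfE lt0r_neq0.
pose b := invmx A *m a.
have Ab : A *m b = a by rewrite /b mulmxA mulmxV // mul1mx.
exists ((hermT b *m A *m b) 0 0); first exact: pA.
move=> c.
have -> : A + c *: (a *m hermT a) = A *m (1%:M + (c *: b) *m hermT a).
  by rewrite mulmxDr mulmx1 -scalemxAl -scalemxAr mulmxA Ab.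
rewrite det_mulmx det_rank1; congr (_ * (1 + _)).
rewrite -scalemxAr mxE; congr (_ * _).
by rewrite -Ab hermT_mul -hA.
Qed.

Lemma good_step n (A : 'M[C]_n) (a : 'cV[C]_n) (c : C) :
  good A -> 0 <= c -> good (A + c *: (a *m hermT a)).
Proof.
move=> gA c0; have [q q0 dq] := det_step a gA.
split; first by apply: psd_add; [case: gA | exact: psd_rank1].
rewrite dq; apply: mulr_gt0; first by case: gA.
apply: (lt_le_trans ltr01); by rewrite lerDl mulr_ge0.
Qed.

Lemma good_sum n K (a : 'I_K -> 'cV[C]_n) (c : 'I_K -> C) (A : 'M[C]_n) :
  good A -> (forall k, 0 <= c k) ->
  good (A + \sum_k c k *: (a k *m hermT (a k))).
Proof.
elim: K a c A => [|K IH] a c A gA c0; first by rewrite big_ord0 addr0.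
rewrite big_ord_recl addrA; apply: IH => //; exact: good_step.
Qed.

Lemma det_mono n K (a : 'I_K -> 'cV[C]_n) (c c' : 'I_K -> C) (A : 'M[C]_n) :
  good A -> (forall k, 0 <= c k <= c' k) ->
  \det (A + \sum_k c k *: (a k *m hermT (a k))) <=
  \det (A + \sum_k c' k *: (a k *m hermT (a k))).
Proof.
elim: K a c c' A => [|K IH] a c c' A gA cc; first by rewrite !big_ord0.
have c0 k : 0 <= c k by case/andP: (cc k).
have c'0 k : 0 <= c' k by case/andP: (cc k) => h1 h2; exact: le_trans h2.
rewrite !big_ord_recl !addrA.
apply: le_trans (IH _ _ _ _ (good_step _ gA (c0 ord0)) (fun k => cc _)) _.
rewrite ![A + _ + \sum_i _]addrAC.
have gB := @good_sum _ _ (fun i => a (lift ord0 i)) (fun i => c' (lift ord0 i)) A gA (fun k => c'0 (lift ord0 k)).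
have [q q0 dq] := det_step (a ord0) gB.
rewrite !dq; apply: ler_wpM2l; first by case: gB => _ /ltW.
rewrite lerD2l; apply: ler_wpM2r => //; by case/andP: (cc ord0).
Qed.


Lemma hermTB m n (A B : 'M[C]_(m, n)) : hermT (A - B) = hermT A - hermT B.
Proof. by apply/matrixP => i j; rewrite !mxE rmorphB. Qed.

Lemma hermT_delta n (i : 'I_n) : hermT (delta_mx i 0 : 'cV[C]_n) = (delta_mx 0 i : 'rV[C]_n).
Proof. by apply/matrixP => k l; rewrite !mxE conjC_nat andbC. Qed.

Lemma qf_delta n (Q : 'M[C]_n) i j :
  (hermT (delta_mx i 0 : 'cV[C]_n) *m Q *m (delta_mx j 0 : 'cV[C]_n)) 0 0 = Q i j.
Proof. by rewrite hermT_delta -rowE -colE !mxE. Qed.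

Lemma qfE n (Q : 'M[C]_n) (x : 'cV[C]_n) :
  (hermT x *m Q *m x) 0 0 = \sum_i \sum_j (x i 0)^* * Q i j * x j 0.
Proof.
rewrite mxE exchange_big /=; apply: eq_bigr => j _.
rewrite mxE mulr_suml; apply: eq_bigr => i _; by rewrite hermTE.
Qed.

Lemma entB (A B : 'M[C]_1) : (A - B) 0 0 = A 0 0 - B 0 0.
Proof. by rewrite !mxE. Qed.
Lemma entZ (a : C) (A : 'M[C]_1) : (a *: A) 0 0 = a * A 0 0.
Proof. by rewrite !mxE. Qed.
Lemma qleft n (Q : 'M[C]_n) (u v w : 'cV[C]_n) a b :
  hermT (a *: u - b *: v) *m Q *m w =
  a^* *: (hermT u *m Q *m w) - b^* *: (hermT v *m Q *m w).
Proof. by rewrite hermTB !hermTZ !mulmxBl !scalemxAl. Qed.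
Lemma qright n (Q : 'M[C]_n) (u v w : 'cV[C]_n) a b :
  hermT w *m Q *m (a *: u - b *: v) =
  a *: (hermT w *m Q *m u) - b *: (hermT w *m Q *m v).
Proof. by rewrite mulmxBr !scalemxAr. Qed.

Lemma qleftE n (Q : 'M[C]_n) (u v w : 'cV[C]_n) a b :
  (hermT (a *: u - b *: v) *m Q *m w) 0 0 =
  a^* * (hermT u *m Q *m w) 0 0 - b^* * (hermT v *m Q *m w) 0 0.
Proof. by rewrite qleft entB !entZ. Qed.
Lemma qrightE n (Q : 'M[C]_n) (u v w : 'cV[C]_n) a b :
  (hermT w *m Q *m (a *: u - b *: v)) 0 0 =
  a * (hermT w *m Q *m u) 0 0 - b * (hermT w *m Q *m v) 0 0.
Proof. by rewrite qright entB !entZ. Qed.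

Lemma qf_le_tr n (Q : 'M[C]_n) (x : 'cV[C]_n) : psd Q ->
  (hermT x *m Q *m x) 0 0 <= (hermT x *m x) 0 0 * \tr Q.
Proof.
move=> [hQ pQ].
pose z i j : 'cV[C]_n := (x j 0)^* *: delta_mx i 0 - (x i 0)^* *: delta_mx j 0.
pose F i j := Q i i * ((x j 0)^* * x j 0).
pose G i j := (x i 0)^* * Q i j * x j 0.
have qz i j : (hermT (z i j) *m Q *m z i j) 0 0 =
   F i j - G i j - G j i + F j i.
  rewrite /z qleftE !qrightE !qf_delta /F /G !conjCK; ring.
have S0 : 0 <= \sum_i \sum_j (hermT (z i j) *m Q *m z i j) 0 0.
  by apply: sumr_ge0 => i _; apply: sumr_ge0 => j _; exact: pQ.
have SF : \sum_i \sum_j F i j = \tr Q * (hermT x *m x) 0 0.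
  rewrite /mxtrace mulr_suml; apply: eq_bigr => i _.
  rewrite /F -mulr_sumr mxE; congr (_ * _); apply: eq_bigr => j _.
  by rewrite hermTE.
have SF' : \sum_i \sum_j F j i = \sum_i \sum_j F i j by rewrite exchange_big.
have SG' : \sum_i \sum_j G j i = \sum_i \sum_j G i j by rewrite exchange_big.
have SG : \sum_i \sum_j G i j = (hermT x *m Q *m x) 0 0 by rewrite qfE.
have E : \sum_i \sum_j (hermT (z i j) *m Q *m z i j) 0 0 =
   2 * ((hermT x *m x) 0 0 * \tr Q - (hermT x *m Q *m x) 0 0).
  under eq_bigr => i _ do under eq_bigr => j _ do rewrite qz.
  under eq_bigr => i _ do rewrite big_split /= !sumrB.
  rewrite big_split /= !sumrB SF' SG' SG SF; ring.
move: S0; rewrite E pmulr_rge0 ?ltr0n // subr_ge0 //.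
Qed.


Lemma rC_conj (r : R) : (rC r)^* = rC r.
Proof. exact: conjc_real. Qed.

Lemma expj_norm (t : R) : (expj t)^* * expj t = 1.
Proof.
rewrite /expj; apply/eqP; rewrite eq_complex /=; apply/andP; split; apply/eqP.
  by rewrite mulNr opprK -!expr2 cos2Dsin2.
by rewrite mulNr mulrC addrN.
Qed.

Lemma rank1_sandwich m n (c : C) (a : 'cV[C]_m) (t : 'cV[C]_n) (Q : 'M[C]_n) :
  (c *: (a *m hermT t)) *m Q *m hermT (c *: (a *m hermT t)) =
  (c * c^* * (hermT t *m Q *m t) 0 0) *: (a *m hermT a).
Proof.
rewrite hermTZ hermT_mul hermTK -scalemxAr -!scalemxAl scalerA.
have -> : a *m hermT t *m Q *m (t *m hermT a) = a *m (hermT t *m Q *m t) *m hermT a.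
  by rewrite !mulmxA.
rewrite {1}[hermT t *m Q *m t]mx11_scalar mul_mx_scalar -scalemxAl scalerA.
by rewrite (mulrC c^*).
Qed.


Variables (lambda d : R) (M : nat).

Lemma aT_norm N th (w : 'I_N -> R) : (0 < N)%N ->
  (hermT (aT lambda th w) *m aT lambda th w) 0 0 = 1.
Proof.
move=> N0; rewrite mxE.
have s0 : 0 <= (N%:R : R) by rewrite ler0n.
under eq_bigr => n _ do rewrite hermTE !mxE -normCKC normrM exprMn [`|expj _| ^+ 2]normCKC expj_norm mulr1
   ger0_norm ?ler0c ?invr_ge0 ?sqrtr_ge0 // -rmorphXn.
rewrite sumr_const card_ord -rmorphMn exprVn sqr_sqrtr // -mulr_natr mulVf ?rmorph1 //.
by rewrite pnatr_eq0 -lt0n.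
Qed.

Lemma chan_L1 L (HL : L = 1%N) N (gamma : 'I_L -> C) (beta theta : 'I_L -> R)
  (w : 'I_N -> R) (Q : 'M[C]_N) :
  chan lambda d M gamma beta theta w *m Q *m hermT (chan lambda d M gamma beta theta w) =
  (rC (M%:R * N%:R) * `|gamma (cast_ord (esym HL) ord0)| ^+ 2 *
     (hermT (aT lambda (theta (cast_ord (esym HL) ord0)) w) *m Q *m
        aT lambda (theta (cast_ord (esym HL) ord0)) w) 0 0)
  *: (aR lambda d M (beta (cast_ord (esym HL) ord0)) *m
        hermT (aR lambda d M (beta (cast_ord (esym HL) ord0)))).
Proof.
subst L; set l0 := cast_ord _ _.
have -> : l0 = ord0 by apply: val_inj.
have AR1 : AR lambda d M beta = aR lambda d M (beta ord0).
  by apply/matrixP => i j; rewrite !mxE (ord1 j).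
have AT1 : AT lambda theta w = aT lambda (theta ord0) w.
  by apply/matrixP => i j; rewrite !mxE (ord1 j).
have G1 : Gam gamma = (gamma ord0)%:M.
  by apply/matrixP => i j; rewrite (ord1 i) (ord1 j) !mxE eqxx mulr1n.
have -> : chan lambda d M gamma beta theta w =
   (rC (Num.sqrt (M%:R * N%:R)) * gamma ord0) *:
     (aR lambda d M (beta ord0) *m hermT (aT lambda (theta ord0) w)).
  by rewrite /chan AR1 AT1 G1 mul_mx_scalar -scalemxAl scalerA.
rewrite rank1_sandwich.
congr (_ * _ *: _).
rewrite -normCK normrM exprMn ger0_norm; last by rewrite /rC ler0c sqrtr_ge0.
by rewrite /rC -rmorphXn sqr_sqrtr // mulr_ge0 ?ler0n.
Qed.

Lemma cub_L1 L (HL : L = 1%N) (K : R) (gamma : 'I_L -> C) (beta : 'I_L -> R)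
  (Qt : 'M[C]_L) :
  rC K *: (AR lambda d M beta *m Gam gamma *m Qt *m hermT (Gam gamma) *m
            hermT (AR lambda d M beta)) =
  (rC K * `|gamma (cast_ord (esym HL) ord0)| ^+ 2 *
     Qt (cast_ord (esym HL) ord0) (cast_ord (esym HL) ord0))
  *: (aR lambda d M (beta (cast_ord (esym HL) ord0)) *m
        hermT (aR lambda d M (beta (cast_ord (esym HL) ord0)))).
Proof.
subst L; set l0 := cast_ord _ _.
have -> : l0 = ord0 by apply: val_inj.
have AR1 : AR lambda d M beta = aR lambda d M (beta ord0).
  by apply/matrixP => i j; rewrite !mxE (ord1 j).
have G1 : Gam gamma = (gamma ord0)%:M.
  by apply/matrixP => i j; rewrite (ord1 i) (ord1 j) !mxE eqxx mulr1n.
have HG : hermT ((gamma ord0)%:M : 'M[C]_1) = ((gamma ord0)^*)%:M.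
  by apply/matrixP => i j; rewrite (ord1 i) (ord1 j) !mxE eqxx !mulr1n.
rewrite AR1 G1 HG {1}(mx11_scalar Qt) !mul_mx_scalar -!scalemxAl !scalerA.
congr (_ *: _); rewrite normCK; ring.
Qed.

Lemma L1_entry L (HL : L = 1%N) (P : R) (Qt : 'M[C]_L) :
  psd Qt -> \tr Qt <= rC (L%:R * P) ->
  0 <= Qt (cast_ord (esym HL) ord0) (cast_ord (esym HL) ord0) <= rC P.
Proof.
subst L; set l0 := cast_ord _ _.
have -> : l0 = ord0 by apply: val_inj.
move=> [_ pQ]; rewrite /mxtrace big_ord1 mul1r => ->; rewrite andbT.
by have := pQ 1%:M; rewrite hermT1 mulmx1 mul1mx.
Qed.

End Gen.

Local Open Scope complex_scope.
Lemma ln_Re_le (R : realType) (x y : R[i]) : 0 < x -> x <= y -> ln (complex.Re x) <= ln (complex.Re y).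
Proof.
rewrite ltcE lecE => /andP[_ x0] /andP[_ xy].
by rewrite ler_ln ?posrE //; exact: lt_le_trans xy.
Qed.

End Aux.
Import Aux.

Local Open Scope complex_scope.

Theorem lemma2 (R : realType) (lambda : R) (M U : nat)
  (N : 'I_U -> nat) (W P : 'I_U -> R)
  (L : 'I_U -> nat)
  (gamma : forall u, 'I_(L u) -> R[i]) (beta theta : forall u, 'I_(L u) -> R) :
  0 < lambda -> (0 < M)%N -> (forall u, 0 < N u)%N ->
  (forall u, 0 < W u) -> (forall u, 0 < P u) ->
  (forall u l, 0 <= beta u l <= pi) -> (forall u l, 0 <= theta u l <= pi) ->
  forall HL : (forall u, L u = 1%N),
  let d := lambda / 2 in
  let G u w := chan lambda d M (gamma u) (beta u) (theta u) w in
  let Cstar := opt_value (fun c => exists (Q : forall u, 'M[R[i]]_(N u))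
                                     (w : forall u, 'I_(N u) -> R),
      (forall u, psd (Q u) /\ \tr (Q u) <= rC (P u)) /\
      (forall u n, 0 <= w u n <= W u) /\
      (forall u, injective (w u)) /\
      c = logdet ((\sum_(u < U) (G u (w u) *m Q u *m hermT (G u (w u)))) + 1%:M)) in
  let Cub := opt_value (fun c => exists (Qt : forall u, 'M[R[i]]_(L u)),
      (forall u, psd (Qt u) /\ \tr (Qt u) <= rC ((L u)%:R * P u)) /\
      c = logdet (\sum_(u < U)
             (rC (M%:R * (N u)%:R) *: (AR lambda d M (beta u) *m Gam (gamma u)
                 *m Qt u *m hermT (Gam (gamma u)) *m hermT (AR lambda d M (beta u))))
             + 1%:M)) in
  let v := logdet (\sum_(u < U)
      (rC (M%:R * (N u)%:R * P u) * `|gamma u (cast_ord (esym (HL u)) ord0)| ^+ 2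
        *: (aR lambda d M (beta u (cast_ord (esym (HL u)) ord0))
             *m hermT (aR lambda d M (beta u (cast_ord (esym (HL u)) ord0))))) + 1%:M) in
  Cstar v /\ Cub v.
Proof.
move=> hl hM hN hW hP hb ht HL d G Cstar Cub v.
pose l0 u := cast_ord (esym (HL u)) ord0.
pose a u := aR lambda d M (beta u (l0 u)).
pose K u := rC (M%:R * (N u)%:R) * `|gamma u (l0 u)| ^+ 2.
have K0 u : 0 <= K u.
  by rewrite /K mulr_ge0 ?exprn_ge0 // /rC ler0c mulr_ge0 ?ler0n.
have cmaxE u : rC (M%:R * (N u)%:R * P u) * `|gamma u (cast_ord (esym (HL u)) ord0)| ^+ 2 = K u * rC (P u).
  by rewrite /K /rC rmorphM /=; ring.
have key : forall c : 'I_U -> R[i], (forall u, 0 <= c u <= K u * rC (P u)) ->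
    logdet (\sum_u c u *: (a u *m hermT (a u)) + 1%:M) <= v.
  move=> c hc.
  have c0 u : 0 <= c u by case/andP: (hc u).
  have := det_mono a (@good1 R M) hc.
  have [_ gp] := good_sum a (@good1 R M) c0.
  have -> : v = logdet (\sum_u (K u * rC (P u)) *: (a u *m hermT (a u)) + 1%:M).
    rewrite /v; congr (logdet (_ + _)); apply: eq_bigr => u _.
    congr (_ *: _); exact: cmaxE.
  rewrite /logdet => hle; apply: ln_Re_le.
    by rewrite [_ + 1%:M]addrC.
  by rewrite [_ + 1%:M]addrC [X in _ <= \det X]addrC.
split.
- split.
  + pose w0 u (n : 'I_(N u)) := W u * (n%:R / (N u)%:R).
    pose t u := aT lambda (theta u (l0 u)) (w0 u).
    pose Q0 u := rC (P u) *: (t u *m hermT (t u)).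
    have P0 u : 0 <= rC (P u) by rewrite /rC ler0c ltW.
    have tn u : (hermT (t u) *m t u) 0 0 = 1 by rewrite aT_norm.
    have qfQ0 u : (hermT (t u) *m Q0 u *m t u) 0 0 = rC (P u).
      rewrite /Q0 -scalemxAr -scalemxAl entZ mulmxA.
      by rewrite -[_ *m hermT (t u) *m t u]mulmxA mx11_mul tn !mulr1.
    exists Q0, w0; split; [|split; [|split]].
    * move=> u; split; first exact: psd_rank1.
      by rewrite /Q0 mxtraceZ mxtrace_mulC /mxtrace big_ord1 tn mulr1.
    * move=> u n; rewrite /w0; apply/andP; split.
        by apply: mulr_ge0; [exact: ltW | rewrite divr_ge0 ?ler0n].
      rewrite -[X in _ <= X](mulr1 (W u)); apply: ler_wpM2l; first exact: ltW.
      by rewrite ler_pdivrMr ?ltr0n // mul1r ler_nat ltnW.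
    * move=> u n m /(mulfI (lt0r_neq0 (hW u))).
      have Nu0 : ((N u)%:R : R)^-1 != 0 by rewrite invr_eq0 pnatr_eq0 -lt0n hN.
      move/(mulIf Nu0)/eqP; rewrite eqr_nat => /eqP; exact: val_inj.

    * rewrite /v; congr (logdet (_ + _)); apply: eq_bigr => u _.
      rewrite /G chan_L1; congr (_ *: _).
      transitivity (K u * rC (P u)); first exact: cmaxE u.
      congr (_ * _); symmetry; exact: qfQ0.
  + move=> y [Q [w [hQ [_ [_ ->]]]]].
    under eq_bigr => u _ do rewrite /G chan_L1 -/(l0 u) -/(a u) -/(K u).
    apply: key => u.
    have [[hQh pQ] trQ] := hQ u.
    have tn := aT_norm lambda (theta u (l0 u)) (w u) (hN u).
    rewrite mulr_ge0 ?K0 ?pQ //=.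
    apply: ler_wpM2l; first exact: K0.
    apply: le_trans (qf_le_tr _ (conj hQh pQ)) _.
    by rewrite tn mul1r.
- split.
  + pose Qt0 u : 'M[R[i]]_(L u) := (rC (P u))%:M.
    have P0 u : 0 <= rC (P u) by rewrite /rC ler0c ltW.
    exists Qt0; split.
    * move=> u; split; last first.
        by rewrite /Qt0 mxtrace_scalar /rC rmorphM rmorph_nat mulr_natl.
      split; first by rewrite /Qt0 -scalemx1 hermTZ hermT1 rC_conj.
      move=> x; rewrite /Qt0 -scalemx1 -scalemxAr -scalemxAl entZ mulmx1.
      by rewrite mulr_ge0 ?qf_ge0.
    * rewrite /v; congr (logdet (_ + _)); apply: eq_bigr => u _.
      rewrite (cub_L1 lambda d M (HL u)); congr (_ *: _).
      transitivity (K u * rC (P u)); first exact: cmaxE u.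
      by congr (_ * _); rewrite /Qt0 mxE eqxx mulr1n.
  + move=> y [Qt [hQt ->]].
    under eq_bigr => u _ do rewrite (cub_L1 lambda d M (HL u)) -/(l0 u) -/(a u) -/(K u).
    apply: key => u.
    have [hq1 hq2] := hQt u.
    have /andP[e1 e2] := L1_entry (HL u) hq1 hq2.
    rewrite mulr_ge0 ?K0 //=; exact: ler_wpM2l.
Qed.
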